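(* Let $\Gamma$ and $\Xi$ be as in the context. For any $\gamma,\gamma_1,\gamma_2\in\Gamma$ and $\xi_1,\xi_2\in\Xi$, $$d_o^2(\gamma_1\xi_1\infty,\gamma_2\xi_2\infty)\,\tilde h(\gamma_1\xi_1\infty)\,\tilde h(\gamma_2\xi_2\infty)=d_o^2(\gamma\gamma_1\xi_1\infty,\gamma\gamma_2\xi_2\infty)\,\tilde h(\gamma\gamma_1\xi_1\infty)\,\tilde h(\gamma\gamma_2\xi_2\infty).$$
   Context: $n\ge2$, $G=\mathrm{SO}(n,1)$, $K\cong\mathrm{SO}(n)$ maximal compact, $\mathbb H^n=G/K$ with hyperbolic distance $d$, $o=K$. $A$ a one-parameter $\mathbb R$-split torus, $M=Z_G(A)\cap K$, $N$ the expanding horospherical subgroup, $P=MAN$; $\partial\mathbb H^n=G/P\cong\mathbb R^{n-1}\cup\{\infty\}$ with $\infty=P$. $\Gamma\subset G$ discrete with finite covolume and $\Xi\subset G$ a finite set (containing $e$) of cusp representatives; $\gamma\xi\infty$ are the cusps. Busemann function: $B_\zeta(x,y)=\lim_{t\to\infty}(d(x,\zeta(t))-d(y,\zeta(t)))$ for a geodesic ray $\zeta(t)\to\zeta$. Busemann height: $\tilde h(\gamma\xi\infty)=\exp(B_{\xi\infty}(\gamma^{-1}o,o))$ (defined via the pair $(\gamma,\xi)$). Gromov metric: $d_o(\zeta_1,\zeta_2)=\exp\big(-\tfrac12\lim_{t\to\infty}(B_{\zeta_1}(o,\zeta(t))+B_{\zeta_2}(o,\zeta(t)))\big)$ with $\zeta(t)$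 a geodesic ray converging to $\zeta_1$. *)

(* Defs.v *)
From HB Require Import structures.
From mathcomp Require Import all_boot all_order all_algebra.
From mathcomp Require Import all_classical all_reals all_analysis.
Set Implicit Arguments. Unset Strict Implicit. Unset Printing Implicit Defensive.
Import Order.TTheory GRing.Theory Num.Theory.
Local Open Scope classical_set_scope.
Local Open Scope ring_scope.

Section Hyperbolic.
Variables (R : realType) (n : nat).
(* Ambient Minkowski space R^{n,1} = column vectors of size n+1;
   the last coordinate (index n = ord_max) is the time coordinate. *)
Definition tidx : 'I_n.+1 := ord_max.

Definition Jmx : 'M[R]_(n.+1) := diag_mx (\row_i (if i == tidx then -1 else 1)).

Definition mink (x y : 'cV[R]_(n.+1)) : R := (x^T *m Jmx *m y) 0 0.

(* base point o = e_n, the point of H^n fixed by K = SO(n) *)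
Definition hpt_o : 'cV[R]_(n.+1) := delta_mx tidx 0.

Definition in_hyp (x : 'cV[R]_(n.+1)) : Prop := mink x x = -1 /\ 0 < x tidx 0.

Definition hcosh (t : R) : R := (expR t + expR (- t)) / 2.
Definition hsinh (t : R) : R := (expR t - expR (- t)) / 2.
Definition hacosh (t : R) : R := ln (t + Num.sqrt (t ^+ 2 - 1)).

Definition hdist (x y : 'cV[R]_(n.+1)) : R := hacosh (- mink x y).

(* G = SO(n,1) (identity component, G/K = H^n with K = Stab(o) = SO(n)) *)
Definition inG (g : 'M[R]_(n.+1)) : Prop :=
  g^T *m Jmx *m g = Jmx /\ \det g = 1 /\ 0 < g tidx tidx.

(* boundary points: future null vectors (a boundary point is the ray R_{>0} v;
   all quantities below are invariant under positive rescaling of v) *)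
Definition in_bdry (v : 'cV[R]_(n.+1)) : Prop := mink v v = 0 /\ 0 < v tidx 0.

(* unit-speed geodesic ray starting at x in H^n and converging to the
   boundary point [v] *)
Definition gray (x v : 'cV[R]_(n.+1)) (t : R) : 'cV[R]_(n.+1) :=
  hcosh t *: x + hsinh t *: ((- mink x v)^-1 *: v - x).

Definition busemann (v x y : 'cV[R]_(n.+1)) : R :=
  lim ((fun t : R => hdist x (gray hpt_o v t) - hdist y (gray hpt_o v t)) @ +oo).

(* Gromov metric d_o([v1],[v2]) = exp(-1/2 lim_{t->oo} (B_{v1}(o,zeta(t)) + B_{v2}(o,zeta(t)))),
   zeta the geodesic ray from o to [v1]; the limit is taken in the extended
   reals (it is +oo when [v1] = [v2], giving d_o = 0). *)
Definition gromov (v1 v2 : 'cV[R]_(n.+1)) : R :=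
  fine (expeR (- (lim ((fun t : R =>
          (busemann v1 hpt_o (gray hpt_o v1 t) + busemann v2 hpt_o (gray hpt_o v1 t))%:E)
          @ +oo%R)) * (2^-1)%:E)%E).

(* Busemann height of the cusp gamma xi infty, defined via the pair (gamma, xi):
   h(gamma xi oo) = exp(B_{xi oo}(gamma^{-1} o, o)) *)
Definition bheight (inf : 'cV[R]_(n.+1)) (g xi : 'M[R]_(n.+1)) : R :=
  expR (busemann (xi *m inf) (invmx g *m hpt_o) hpt_o).

Definition subgroupG (Gam : set 'M[R]_(n.+1)) : Prop :=
  (forall g, Gam g -> inG g) /\ Gam 1%:M /\
  (forall g h, Gam g -> Gam h -> Gam (g *m h)) /\
  (forall g, Gam g -> Gam (invmx g)).

Definition discrete_set (Gam : set 'M[R]_(n.+1)) : Prop :=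
  forall g, Gam g -> exists2 e : R, 0 < e &
    forall h, Gam h -> (forall i j, `|h i j - g i j| < e) -> h = g.

End Hyperbolic.

(* Main.v *)
Require Import Defs.
From HB Require Import structures.
From mathcomp Require Import all_boot all_order all_algebra.
From mathcomp Require Import all_classical all_reals all_analysis.
From mathcomp Require Import ring lra.
Import Order.TTheory GRing.Theory Num.Theory numFieldNormedType.Exports.
Local Open Scope classical_set_scope.
Local Open Scope ring_scope.

Section Alg.
Variables (R : realType) (n : nat).
Implicit Types (x y z u v : 'cV[R]_(n.+1)) (g : 'M[R]_(n.+1)).

Lemma minkE x y : mink x y =
  \sum_(i | i != tidx n) x i 0 * y i 0 - x (tidx n) 0 * y (tidx n) 0.
Proof.
rewrite /mink /Jmx mul_mx_diag !mxE (bigD1 (tidx n)) //= !mxE eqxx.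
rewrite addrC; congr (_ + _); last by rewrite mulrN1 mulNr.
by apply: eq_bigr => i /negbTE Hi; rewrite !mxE Hi mulr1.
Qed.

Lemma minkC x y : mink x y = mink y x.
Proof. by rewrite !minkE; congr (_ - _); [apply: eq_bigr => i _|]; rewrite mulrC. Qed.

Lemma minkDr x y z : mink x (y + z) = mink x y + mink x z.
Proof. by rewrite /mink mulmxDr mxE. Qed.

Lemma minkZr x a y : mink x (a *: y) = a * mink x y.
Proof. by rewrite /mink -scalemxAr mxE. Qed.

Lemma minkNr x y : mink x (- y) = - mink x y.
Proof. by rewrite -scaleN1r minkZr mulN1r. Qed.

Lemma minkBr x y z : mink x (y - z) = mink x y - mink x z.
Proof. by rewrite minkDr minkNr. Qed.

Lemma mink_o z : mink (hpt_o R n) z = - z (tidx n) 0.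
Proof.
rewrite minkE big1 ?sub0r; last by move=> i /negbTE Hi; rewrite /hpt_o mxE Hi mul0r.
by rewrite /hpt_o mxE !eqxx mul1r.
Qed.

Lemma mink_inv g x y : inG g -> mink (g *m x) (g *m y) = mink x y.
Proof.
case=> H _; rewrite /mink trmx_mul.
have -> : x^T *m g^T *m Jmx R n *m (g *m y) = x^T *m (g^T *m Jmx R n *m g) *m y by rewrite !mulmxA.
by rewrite H.
Qed.

Lemma inG_unit g : inG g -> g \in unitmx.
Proof. by case=> _ [H _]; rewrite unitmxE H unitr1. Qed.

Lemma mink_invmx g x y : inG g -> mink (invmx g *m x) y = mink x (g *m y).
Proof.
move=> Hg; rewrite -(mink_inv g (invmx g *m x) y Hg) mulmxA mulmxV ?mul1mx //; exact: inG_unit.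
Qed.

Lemma cs_sum (P : pred 'I_n.+1) (a b : 'I_n.+1 -> R) lam :
  2 * lam * \sum_(i | P i) a i * b i <=
  lam ^+ 2 * \sum_(i | P i) a i ^+ 2 + \sum_(i | P i) b i ^+ 2.
Proof.
have: 0 <= \sum_(i | P i) (lam * a i - b i) ^+ 2 by apply: sumr_ge0 => i _; exact: sqr_ge0.
have -> : \sum_(i | P i) (lam * a i - b i) ^+ 2 =
  lam ^+ 2 * \sum_(i | P i) a i ^+ 2 + \sum_(i | P i) b i ^+ 2
  - 2 * lam * \sum_(i | P i) a i * b i.
  rewrite !mulr_sumr -big_split -sumrB /=; apply: eq_bigr => i _; ring.
by rewrite subr_ge0.
Qed.

Lemma inG_JT g : inG g -> g *m Jmx R n *m g^T = Jmx R n.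
Proof.
move=> Hg; have Hu := inG_unit g Hg; case: Hg => H _.
have JJ : Jmx R n *m Jmx R n = 1%:M.
  rewrite /Jmx mul_mx_diag; apply/matrixP => i j; rewrite !mxE.
  have [->|_] := eqVneq i j; last by rewrite mulr0n mul0r.
  by case: (j == tidx n); rewrite ?mulr1n ?mulrNN ?mulr1.
have H1 : (Jmx R n *m g^T *m Jmx R n) *m g = 1%:M by rewrite -!mulmxA (mulmxA g^T) H.
have H2 : g *m (Jmx R n *m g^T *m Jmx R n) = 1%:M by apply: mulmx1C.
by rewrite -[RHS]mul1mx -H2 -!mulmxA JJ mulmx1.
Qed.

Lemma cs_neg (P : pred 'I_n.+1) (a b : 'I_n.+1 -> R) lam :
  - (lam ^+ 2 * \sum_(i | P i) a i ^+ 2 + \sum_(i | P i) b i ^+ 2) <=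
  2 * lam * \sum_(i | P i) a i * b i.
Proof.
have := cs_sum P (fun i => - a i) b lam.
have -> : \sum_(i | P i) (- a i) * b i = - \sum_(i | P i) a i * b i.
  by rewrite -sumrN; apply: eq_bigr => i _; rewrite mulNr.
have -> : \sum_(i | P i) (- a i) ^+ 2 = \sum_(i | P i) a i ^+ 2.
  by apply: eq_bigr => i _; rewrite sqrrN.
move=> H; rewrite lerNl; lra.
Qed.

Lemma inG_bdry g v : inG g -> in_bdry v -> in_bdry (g *m v).
Proof.
move=> Hg [Hv0 Hvt]; split; first by rewrite mink_inv.
have Ht := inG_JT g Hg.
have Hrow : \sum_(j | j != tidx n) g (tidx n) j ^+ 2 - g (tidx n) (tidx n) ^+ 2 = -1.
  have := congr1 (fun M : 'M[R]_(n.+1) => M (tidx n) (tidx n)) Ht.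
  rewrite /= mul_mx_diag !mxE (bigD1 (tidx n)) //= !mxE !eqxx => E.
  change (-1 *+ true) with (-1 : R) in E.
  rewrite -[RHS]E addrC; congr (_ + _).
    by apply: eq_bigr => i /negbTE Hi; rewrite !mxE Hi mulr1 expr2.
  by rewrite mulrN1 mulNr expr2.
have Hnull : \sum_(j | j != tidx n) v j 0 ^+ 2 - v (tidx n) 0 ^+ 2 = 0.
  by rewrite -[RHS]Hv0 minkE; congr (_ - _); try apply: eq_bigr => i _; rewrite ?expr2.
case: Hg => _ [_ Hgtt].
rewrite mxE (bigD1 (tidx n)) //=.
set S := \sum_(j | _) _.
set A := \sum_(j | j != tidx n) g (tidx n) j ^+ 2 in Hrow.
set B := \sum_(j | j != tidx n) v j 0 ^+ 2 in Hnull.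
set a := g (tidx n) (tidx n) in Hrow Hgtt *.
set b := v (tidx n) 0 in Hnull Hvt *.
have := cs_neg (fun j => j != tidx n) (fun j => g (tidx n) j) (fun j => v j 0) (b / a).
rewrite -/A -/B -/S => Hcs.
have Hl : b / a * a = b by rewrite mulfVK // gt_eqF.
have Hl0 : 0 < b / a by apply: divr_gt0.
nra.
Qed.

Lemma null_null u v : in_bdry u -> in_bdry v -> mink u v <= 0.
Proof.
move=> [Hu0 Hut] [Hv0 Hvt].
have Hnu : \sum_(j | j != tidx n) u j 0 ^+ 2 - u (tidx n) 0 ^+ 2 = 0.
  by rewrite -[RHS]Hu0 minkE; congr (_ - _); try apply: eq_bigr => i _; rewrite ?expr2.
have Hnv : \sum_(j | j != tidx n) v j 0 ^+ 2 - v (tidx n) 0 ^+ 2 = 0.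
  by rewrite -[RHS]Hv0 minkE; congr (_ - _); try apply: eq_bigr => i _; rewrite ?expr2.
have := cs_sum (fun j => j != tidx n) (fun j => u j 0) (fun j => v j 0) (v (tidx n) 0 / u (tidx n) 0).
rewrite minkE.
set S := \sum_(j | _) (u j 0 * v j 0).
set A := \sum_(j | j != tidx n) u j 0 ^+ 2 in Hnu *.
set B := \sum_(j | j != tidx n) v j 0 ^+ 2 in Hnv *.
set a := u (tidx n) 0 in Hut Hnu *.
set b := v (tidx n) 0 in Hvt Hnv *.
have Hl : b / a * a = b by rewrite mulfVK // gt_eqF.
have Hl0 : 0 < b / a by apply: divr_gt0.
nra.
Qed.

End Alg.

Section An.
Variable R : realType.

Lemma expR_inv (t : R) : expR t * expR (- t) = 1.
Proof. by rewrite -expRD subrr expR0. Qed.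

Lemma hsinh_r (t : R) : hsinh t * expR (- t) = (1 - expR (- t) ^+ 2) / 2.
Proof.
have E := expR_inv t.
have -> : hsinh t * expR (- t) = (expR t * expR (- t) - expR (- t) ^+ 2) / 2.
  by rewrite /hsinh; ring.
by rewrite E.
Qed.

Lemma cvg_r2 : (expR (- t) ^+ 2 : R) @[t --> +oo] --> 0.
Proof.
have -> : (0 : R) = 0 * 0 by rewrite mulr0.
under eq_fun do rewrite expr2.
apply: cvgM; exact: cvgr_expR.
Qed.

Lemma keylim (a b : R) : 0 < b ->
  ((fun t : R => hacosh (a * expR (- t) + b * hsinh t) - t) @ +oo) --> ln b.
Proof.
move=> b0.
set s := fun t => a * expR (- t) + b * hsinh t.
set Y := fun t => a * expR (- t) ^+ 2 + b * ((1 - expR (- t) ^+ 2) / 2).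
have HsY : forall t, s t * expR (- t) = Y t.
  move=> t; rewrite /s /Y -hsinh_r; ring.
have HY : (Y @ +oo) --> b / 2.
  have -> : b / 2 = a * 0 + b * ((1 - 0) / 2) by rewrite mulr0 add0r subr0 mul1r.
  apply: cvgD; apply: cvgM; try exact: cvg_cst.
    exact: cvg_r2.
  apply: cvgM; last exact: cvg_cst.
  apply: cvgB; [exact: cvg_cst | exact: cvg_r2].
have HZ : ((fun t => Num.sqrt (Y t ^+ 2 - expR (- t) ^+ 2)) @ +oo) --> b / 2.
  have -> : b / 2 = Num.sqrt ((b / 2) ^+ 2 - 0).
    by rewrite subr0 sqrtr_sqr ger0_norm // divr_ge0 // ltW.
  apply: (continuous_cvg _ (@sqrt_continuous R _)).
  apply: cvgB; last exact: cvg_r2.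
  under eq_fun do rewrite expr2.
  by rewrite expr2; apply: cvgM.
have HX : ((fun t => Y t + Num.sqrt (Y t ^+ 2 - expR (- t) ^+ 2)) @ +oo) --> b.
  have -> : b = b / 2 + b / 2 by field.
  exact: cvgD.
have b20 : 0 < b / 2 by apply: divr_gt0.
have Hev := cvgr_gt _ HY _ b20.
apply: (cvg_trans _ (continuous_cvg _ (continuous_ln b0) HX)); apply: near_eq_cvg.
near=> t.
have Yt : 0 < Y t by near: t; exact: Hev.
rewrite /=.
have rt := expR_gt0 (- t).
have st : 0 < s t by rewrite -(pmulr_lgt0 _ rt) HsY.
rewrite /hacosh -/(s t).
have Hsq : Num.sqrt (Y t ^+ 2 - expR (- t) ^+ 2) = Num.sqrt (s t ^+ 2 - 1) * expR (- t).
  have -> : Y t ^+ 2 - expR (- t) ^+ 2 = (s t ^+ 2 - 1) * expR (- t) ^+ 2.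
    by rewrite -HsY; ring.
  have [Hp|Hn] := leP 0 (s t ^+ 2 - 1).
    by rewrite sqrtrM // sqrtr_sqr ger0_norm // ltW.
  rewrite !ltr0_sqrtr ?mul0r //.
  by rewrite pmulr_llt0 // exprn_gt0.
rewrite Hsq -HsY -mulrDl lnM ?expRK ?posrE //.
by apply: ltr_pwDl => //; apply: sqrtr_ge0.
Unshelve. all: by end_near.
Qed.

End An.

Section Bus.
Variables (R : realType) (n : nat).
Implicit Types (x y z u v : 'cV[R]_(n.+1)) (g : 'M[R]_(n.+1)).

Lemma hcoshE (t : R) : hcosh t = expR (- t) + hsinh t.
Proof. rewrite /hcosh /hsinh; lra. Qed.

Lemma gray_mink x v t : in_bdry v ->
  - mink x (gray (hpt_o R n) v t) =
  x (tidx n) 0 * expR (- t) + (- mink x v / v (tidx n) 0) * hsinh t.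
Proof.
move=> _; rewrite /gray minkDr !minkZr minkBr minkZr (minkC _ _ x (hpt_o R n)) !mink_o opprK hcoshE.
ring.
Qed.

Lemma bus_eq v x y : in_bdry v -> 0 < - mink x v -> 0 < - mink y v ->
  busemann v x y = ln (- mink x v) - ln (- mink y v).
Proof.
move=> Hv Hx Hy; have vt := Hv.2.
have bx : 0 < - mink x v / v (tidx n) 0 by apply: divr_gt0.
have by_ : 0 < - mink y v / v (tidx n) 0 by apply: divr_gt0.
have H := cvgB (keylim _ (x (tidx n) 0) _ bx) (keylim _ (y (tidx n) 0) _ by_).
rewrite /busemann.
have -> : (fun t : R => hdist x (gray (hpt_o R n) v t) - hdist y (gray (hpt_o R n) v t)) =
  (fun t => (hacosh (x (tidx n) 0 * expR (- t) + (- mink x v / v (tidx n) 0) * hsinh t) - t)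
   - (hacosh (y (tidx n) 0 * expR (- t) + (- mink y v / v (tidx n) 0) * hsinh t) - t)).
  by apply: funext => t; rewrite /hdist !gray_mink //; lra.
have -> : ln (- mink x v) - ln (- mink y v) =
  ln (- mink x v / v (tidx n) 0) - ln (- mink y v / v (tidx n) 0).
  rewrite !lnM ?posrE ?invr_gt0 //; lra.
apply: cvg_lim; first by [].
apply: H; exact: _.
Qed.


Lemma hsinh_gt0 (t : R) : 0 < t -> 0 < hsinh t.
Proof.
move=> tp; rewrite /hsinh divr_gt0 // subr_gt0 ltr_expR; lra.
Qed.

Lemma gromov_sq v1 v2 : in_bdry v1 -> in_bdry v2 ->
  gromov v1 v2 ^+ 2 = - mink v1 v2 / (2 * (v1 (tidx n) 0 * v2 (tidx n) 0)).
Proof.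
move=> H1 H2; have t1 := H1.2; have t2 := H2.2.
pose a1 := v1 (tidx n) 0; pose a2 := v2 (tidx n) 0.
have a10 : 0 < a1 by exact: t1. have a20 : 0 < a2 by exact: t2.
pose q := - mink v1 v2 / (a1 * a2).
have a12 : a1 * a2 != 0 by rewrite mulf_neq0 // gt_eqF.
have qE : mink v1 v2 = - q * (a1 * a2) by rewrite /q mulNr divfK // opprK.
have q0 : 0 <= q.
  have m0 : mink v1 v2 <= 0 := null_null _ _ _ _ H1 H2.
  by rewrite /q divr_ge0 ?oppr_ge0 // ltW // mulr_gt0.
pose S := fun t : R => - ln (expR (- t) ^+ 2 + q * ((1 - expR (- t) ^+ 2) / 2)).
have Hev : \forall t \near +oo, (busemann v1 (hpt_o R n) (gray (hpt_o R n) v1 t)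
     + busemann v2 (hpt_o R n) (gray (hpt_o R n) v1 t)) = S t.
  near=> t.
  have tp : 0 < t by near: t; apply: nbhs_pinfty_gt; rewrite num_real.
  have e0 := expR_gt0 (- t).
  have hs0 := hsinh_gt0 _ tp.
  have Eo1 : - mink (hpt_o R n) v1 = a1 by rewrite mink_o opprK.
  have Eo2 : - mink (hpt_o R n) v2 = a2 by rewrite mink_o opprK.
  have Ez1 : - mink (gray (hpt_o R n) v1 t) v1 = a1 * expR (- t).
    rewrite minkC gray_mink // H1.1 oppr0 !mul0r addr0 //.
  have Ez2 : - mink (gray (hpt_o R n) v1 t) v2 = a2 * (expR (- t) + q * hsinh t).
    rewrite minkC gray_mink // (minkC _ _ v2 v1) qE /a1 /a2; field; by rewrite gt_eqF.
  have p2 : 0 < expR (- t) + q * hsinh t.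
    by have := mulr_ge0 q0 (ltW hs0); lra.
  have B1 : busemann v1 (hpt_o R n) (gray (hpt_o R n) v1 t) = ln a1 - ln (a1 * expR (- t)).
    by rewrite bus_eq ?Eo1 ?Ez1 // mulr_gt0.
  have B2 : busemann v2 (hpt_o R n) (gray (hpt_o R n) v1 t) =
      ln a2 - ln (a2 * (expR (- t) + q * hsinh t)).
    by rewrite bus_eq ?Eo2 ?Ez2 // mulr_gt0.
  have E3 : expR (- t) ^+ 2 + q * ((1 - expR (- t) ^+ 2) / 2) =
      expR (- t) * (expR (- t) + q * hsinh t).
    by rewrite -hsinh_r; ring.
  rewrite B1 B2 /S E3 [ln (a1 * _)]lnM ?posrE // [ln (a2 * _)]lnM ?posrE // [ln (expR _ * _)]lnM ?posrE //.
  ring.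
have [qp|qz] := boolP (0 < q).
  have q20 : 0 < q / 2 by apply: divr_gt0.
  have HS : S t @[t --> +oo] --> - ln (q / 2).
    have -> : q / 2 = 0 + q * ((1 - 0) / 2) by rewrite subr0 mul1r add0r.
    apply: cvgN.
    apply: (continuous_cvg _ (continuous_ln _)); first by rewrite subr0 mul1r add0r.
    apply: cvgD; first exact: cvg_r2.
    apply: cvgM; first exact: cvg_cst.
    apply: cvgM; last exact: cvg_cst.
    apply: cvgB; [exact: cvg_cst | exact: cvg_r2].
  have Hlim : lim ((fun t : R => (busemann v1 (hpt_o R n) (gray (hpt_o R n) v1 t)
     + busemann v2 (hpt_o R n) (gray (hpt_o R n) v1 t))%:E) @ +oo) = (- ln (q / 2))%:E.
    apply: cvg_lim => //.
    apply: (cvg_trans (near_eq_cvg _)); first by apply: filterS Hev => t /= ->.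
    apply: cvg_EFin; first by apply: nearW.
    exact: HS.
  rewrite /gromov Hlim /= opprK -expRM_natl.
  have -> : (2%:R * (ln (q / 2) / 2) : R) = ln (q / 2) by field.
  rewrite lnK ?posrE // qE /a1 /a2; field.
  by rewrite !gt_eqF.
have qz' : q = 0 by apply/eqP; rewrite eq_le q0 andbT leNgt.
have HS : forall t, S t = t + t.
  move=> t; rewrite /S qz' mul0r addr0 -expRM_natl expRK.
  rewrite mulrN opprK; ring.
have Hlim : lim ((fun t : R => (busemann v1 (hpt_o R n) (gray (hpt_o R n) v1 t)
     + busemann v2 (hpt_o R n) (gray (hpt_o R n) v1 t))%:E) @ +oo) = +oo%E.
  apply: cvg_lim => //.
  apply: (cvg_trans (near_eq_cvg _)); first by apply: filterS Hev => t /= ->.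
  apply/cvgeryP/cvgryPge => A.
  near=> t.
  have tA : A <= t by near: t; apply: nbhs_pinfty_ge; rewrite num_real.
  have t0 : 0 <= t by near: t; apply: nbhs_pinfty_ge; rewrite num_real.
  rewrite HS; lra.
rewrite /gromov Hlim /= mulNyr gtr0_sg ?invr_gt0 // mul1e /=.
by rewrite qE qz' oppr0 !mul0r oppr0 mul0r expr0n.
Unshelve. all: by end_near.
Qed.

End Bus.

Lemma bheight_eq (R : realType) (n : nat) (inf : 'cV[R]_(n.+1)) (g xi : 'M[R]_(n.+1)) :
  in_bdry inf -> inG g -> inG xi ->
  bheight inf g xi = (g *m (xi *m inf)) (tidx n) 0 / (xi *m inf) (tidx n) 0.
Proof.
move=> Hi Hg Hxi.
have Hw := inG_bdry _ _ xi inf Hxi Hi.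
have Hgw := inG_bdry _ _ g _ Hg Hw.
rewrite /bheight bus_eq //; last by rewrite mink_o opprK; exact: Hw.2.
  by rewrite mink_invmx // !mink_o !opprK expRD expRN !lnK ?posrE //; [exact: Hw.2|exact: Hgw.2].
by rewrite mink_invmx // mink_o opprK; exact: Hgw.2.
Qed.

Lemma final_alg (R : realType) (G1 G2 m a b c d e f : R) :
  0 < a -> 0 < b -> 0 < c -> 0 < d -> 0 < e -> 0 < f ->
  G1 ^+ 2 = - m / (2 * (c * d)) -> G2 ^+ 2 = - m / (2 * (e * f)) ->
  G1 ^+ 2 * (c / a) * (d / b) = G2 ^+ 2 * (e / a) * (f / b).
Proof.
move=> pa pb pc pd pe pf -> ->; field.
by rewrite !gt_eqF.
Qed.

Theorem proposition3p7 (R : realType) (n : nat) (hn : (2 <= n)%N)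
  (inf : 'cV[R]_(n.+1)) (hinf : in_bdry inf)
  (Gam : set 'M[R]_(n.+1)) (hGsub : subgroupG Gam) (hGdisc : discrete_set Gam)
  (Xi : seq 'M[R]_(n.+1)) (hXiG : forall xi, xi \in Xi -> inG xi)
  (hXi1 : 1%:M \in Xi)
  (g g1 g2 xi1 xi2 : 'M[R]_(n.+1))
  (hg : Gam g) (hg1 : Gam g1) (hg2 : Gam g2)
  (hxi1 : xi1 \in Xi) (hxi2 : xi2 \in Xi) :
  gromov (g1 *m xi1 *m inf) (g2 *m xi2 *m inf) ^+ 2
    * bheight inf g1 xi1 * bheight inf g2 xi2
  = gromov (g *m g1 *m xi1 *m inf) (g *m g2 *m xi2 *m inf) ^+ 2
    * bheight inf (g *m g1) xi1 * bheight inf (g *m g2) xi2.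
Proof.
case: hGsub => inGam [_ [Hmul _]].
have Gg := inGam _ hg; have Gg1 := inGam _ hg1; have Gg2 := inGam _ hg2.
have Ggg1 := inGam _ (Hmul _ _ hg hg1); have Ggg2 := inGam _ (Hmul _ _ hg hg2).
have X1 := hXiG _ hxi1; have X2 := hXiG _ hxi2.
rewrite !bheight_eq // -!mulmxA.
have Hx1 := inG_bdry _ _ _ _ X1 hinf; have Hx2 := inG_bdry _ _ _ _ X2 hinf.
have Hw1 := inG_bdry _ _ _ _ Gg1 Hx1; have Hw2 := inG_bdry _ _ _ _ Gg2 Hx2.
have Hgw1 := inG_bdry _ _ _ _ Gg Hw1; have Hgw2 := inG_bdry _ _ _ _ Gg Hw2.
have E1 := gromov_sq _ _ _ _ Hw1 Hw2.
have E2 := gromov_sq _ _ _ _ Hgw1 Hgw2.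
rewrite mink_inv // in E2.
apply: final_alg E1 E2.
- exact: Hx1.2.
- exact: Hx2.2.
- exact: Hw1.2.
- exact: Hw2.2.
- exact: Hgw1.2.
- exact: Hgw2.2.
Qed.
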